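(* For every $n\in\mathbb N$, the $\Bbbk\mathbf{FA}$-module $\overline P^{\otimes n}$ has finite length. Consequently every indecomposable projective object of $\mathcal F(\mathbf{FA})$ has finite length.
   Context: Let $\Bbbk$ be a field. $\mathbf{FA}$ denotes the category of finite sets and all maps, and $\mathbf{FI}$, $\mathbf{FS}$, $\mathbf{FB}$ its wide subcategories of injections, surjections and bijections respectively; $\mathbf n=\{1,\dots,n\}$ for $n\in\mathbb N$ ($\mathbf 0=\emptyset$), and $\mathfrak S_n$ is the symmetric group. For a category $\mathcal C$, $\Bbbk\mathcal C(X,Y)$ is the $\Bbbk$-vector space with basis $\mathcal C(X,Y)$. A $\Bbbk\mathbf{FA}$-module is a functor from $\mathbf{FA}$ to $\Bbbk$-vector spaces (these form the abelian category $\mathcal F(\mathbf{FA})$); $\otimes$ denotes the pointwise tensor product over $\Bbbk$, and $\hom_{\Bbbk\mathbf{FA}}$ denotes natural transformations. $P^{\mathbf{FA}}_{\mathbf n}:=\Bbbk\mathbf{FA}(\mathbf n,-)$, so $P^{\mathbf{FA}}_{\mathbf n}(X)\cong\Bbbk[X]^{\otimes n}$ (where $\Bbbk[X]$ has basis $\{[x]:x\in X\}$), with the right $\mathfrak S_n$-action by precomposition, equivalently place permutation of tensor factors; write $P^{\mathbf{FA}}:=P^{\mathbf{FA}}_{\mathbf 1}$. Let $\overline{\Bbbk}$ be the functor with value $\Bbbk$ on non-empty sets (all maps acting by the identity) and $0$ on $\emptyset$, and $\Bbbk_{\mathbf 0}$ the functor with value $\Bbbk$ on $\emptyset$ and $0$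 on non-empty sets. $\overline P$ is the kernel of the surjection $P^{\mathbf{FA}}\to\overline\Bbbk$, $[x]\mapsto 1$; thus $\overline P(X)=\{\sum_x a_x[x]:\sum_x a_x=0\}$. For $n\ge1$, $\overline P^{\otimes n}$ is the $n$-fold pointwise tensor power, a subfunctor of $P^{\mathbf{FA}}_{\mathbf n}$ stable under the place-permutation right action of $\mathfrak S_n$; by convention $\overline P^{\otimes 0}:=\overline\Bbbk$. *)

(* Defs.v *)
From HB Require Import structures.
From mathcomp Require Import all_boot all_algebra.
Set Implicit Arguments. Unset Strict Implicit. Unset Printing Implicit Defensive.
Import GRing.Theory.
Local Open Scope ring_scope.

(* Skeleton of FA: the finite set n = {0,..,n-1} is 'I_n; maps are finite
   functions (so that equality of maps is extensional). *)
Definition fmap (m m' : nat) := {ffun 'I_m -> 'I_m'}.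
Definition fid m : fmap m m := [ffun i => i].
Definition fcomp m1 m2 m3 (g : fmap m2 m3) (f : fmap m1 m2) : fmap m1 m3 :=
  [ffun i => g (f i)].

(* A kFA-module: a functor from (the skeleton of) FA to k-vector spaces. *)
Record FAmod (k : fieldType) := FAMod {
  fa_obj : nat -> lmodType k;
  fa_act : forall m m', fmap m m' -> fa_obj m -> fa_obj m';
  fa_act_lin : forall m m' (f : fmap m m') (a : k) (x y : fa_obj m),
      fa_act f (a *: x + y) = a *: fa_act f x + fa_act f y;
  fa_act_id : forall m (x : fa_obj m), fa_act (fid m) x = x;
  fa_act_comp : forall m1 m2 m3 (f : fmap m1 m2) (g : fmap m2 m3) (x : fa_obj m1),
      fa_act (fcomp g f) x = fa_act g (fa_act f x)
}.

Section Sub.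
Variable k : fieldType.
Variable M : FAmod k.

Definition subfam := forall m, fa_obj M m -> Prop.

Definition is_subfunctor (S : subfam) : Prop :=
  [/\ forall m, S m 0,
      forall m (a : k) (x y : fa_obj M m), S m x -> S m y -> S m (a *: x + y)
    & forall m m' (f : fmap m m') (x : fa_obj M m), S m x -> S m' (@fa_act _ M _ _ f x)].

Definition sub_le (S T : subfam) := forall m x, S m x -> T m x.
Definition sub_lt (S T : subfam) := sub_le S T /\ exists m x, T m x /\ ~ S m x.
Definition full_sub : subfam := fun _ _ => True.

Definition finite_length_sub (S : subfam) : Prop :=
  exists (r : nat) (C : nat -> subfam),
    [/\ forall i, (i <= r)%N -> is_subfunctor (C i),
        forall m x, C 0%N m x <-> x = 0,
        forall m x, C r m x <-> S m x,
        forall i, (i < r)%N -> sub_lt (C i) (C i.+1)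
      & forall i, (i < r)%N -> forall T, is_subfunctor T ->
          ~ (sub_lt (C i) T /\ sub_lt T (C i.+1))].

Definition finite_length : Prop := finite_length_sub full_sub.

Definition indecomposable : Prop :=
  (exists m (x : fa_obj M m), x <> 0) /\
  forall S T : subfam, is_subfunctor S -> is_subfunctor T ->
    (forall m (x : fa_obj M m), exists y z, [/\ S m y, T m z & x = y + z]) ->
    (forall m x, S m x -> T m x -> x = 0) ->
    (forall m x, S m x -> x = 0) \/ (forall m x, T m x -> x = 0).
End Sub.

Definition is_nat_trans (k : fieldType) (M N : FAmod k)
    (phi : forall m, fa_obj M m -> fa_obj N m) : Prop :=
  (forall m (a : k) (x y : fa_obj M m), phi m (a *: x + y) = a *: phi m x + phi m y) /\
  (forall m m' (f : fmap m m') (x : fa_obj M m),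
      phi m' (@fa_act _ M _ _ f x) = @fa_act _ N _ _ f (phi m x)).

(* projective object: lifting along epimorphisms (= pointwise surjective
   natural transformations in the functor category) *)
Definition projective (k : fieldType) (P : FAmod k) : Prop :=
  forall (M N : FAmod k) (pi : forall m, fa_obj M m -> fa_obj N m),
    is_nat_trans pi -> (forall m (y : fa_obj N m), exists x, pi m x = y) ->
  forall g : forall m, fa_obj P m -> fa_obj N m, is_nat_trans g ->
    exists h : forall m, fa_obj P m -> fa_obj M m,
      is_nat_trans h /\ forall m x, pi m (h m x) = g m x.

(* The projective P^FA_n = k FA(n, -): P_n(m) has basis the maps n -> m. *)
Definition Pvec (k : fieldType) (n m : nat) := {ffun fmap n m -> k^o}.

Definition Pact (k : fieldType) n m m' (f : fmap m m') (v : Pvec k n m) : Pvec k n m' :=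
  [ffun g => \sum_(h : fmap n m | fcomp f h == g) v h].

Lemma Pact_lin (k : fieldType) n m m' (f : fmap m m') (a : k) (x y : Pvec k n m) :
  Pact f (a *: x + y) = a *: Pact f x + Pact f y.
Proof.
apply/ffunP => g; rewrite !ffunE /= scaler_sumr -big_split.
by apply: eq_bigr => h _; rewrite !ffunE.
Qed.

Lemma fcomp_id m1 m2 (h : fmap m1 m2) : fcomp (fid m2) h = h.
Proof. by apply/ffunP => i; rewrite !ffunE. Qed.

Lemma fcompA m1 m2 m3 m4 (h : fmap m1 m2) (f : fmap m2 m3) (g : fmap m3 m4) :
  fcomp (fcomp g f) h = fcomp g (fcomp f h).
Proof. by apply/ffunP => i; rewrite !ffunE. Qed.

Lemma Pact_id (k : fieldType) n m (x : Pvec k n m) : Pact (fid m) x = x.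
Proof.
apply/ffunP => g; rewrite ffunE.
under eq_bigl => h do rewrite fcomp_id.
by rewrite big_pred1_eq.
Qed.

Lemma Pact_comp (k : fieldType) n m1 m2 m3 (f : fmap m1 m2) (g : fmap m2 m3) (x : Pvec k n m1) :
  Pact (fcomp g f) x = Pact g (Pact f x).
Proof.
apply/ffunP => y; rewrite !ffunE.
under [RHS]eq_bigr => z _ do rewrite ffunE.
rewrite (partition_big (fun h => fcomp f h) (fun z => fcomp g z == y)) /=;
  last by move=> h; rewrite fcompA.
apply: eq_bigr => z /eqP Hz; apply: eq_bigl => h.
rewrite fcompA; case: (eqVneq (fcomp f h) z) => [->|]; by rewrite ?Hz ?eqxx ?andbT ?andbF.
Qed.

Definition Pmod (k : fieldType) (n : nat) : FAmod k :=
  @FAMod k (fun m => (Pvec k n m : lmodType k)) (@Pact k n)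
    (@Pact_lin k n) (@Pact_id k n) (@Pact_comp k n).

(* pure tensor a_1 (x) ... (x) a_n in k[m]^{(x) n} = P_n(m) *)
Definition ptensor (k : fieldType) n m (a : 'I_n -> {ffun 'I_m -> k}) : Pvec k n m :=
  [ffun h : fmap n m => \prod_(i < n) a i (h i)].

(* Pbar^{(x) n}(m) as a subspace of P_n(m) = k[m]^{(x) n}: the span of the
   pure tensors of elements of Pbar(m) = {sum_x a_x [x] : sum_x a_x = 0};
   for n = 0, the convention Pbar^{(x)0} := kbar (k on nonempty sets, 0 on
   the empty set), viewed inside P_0 (the constant functor k). *)
Definition Pbar_tensor (k : fieldType) (n : nat) : subfam (Pmod k n) :=
  fun m (v : Pvec k n m) =>
    if n is 0 then (0 < m)%N \/ v = 0
    else exists (r : nat) (c : 'I_r -> k) (a : 'I_r -> 'I_n -> {ffun 'I_m -> k}),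
      (forall j i, \sum_(x < m) a j i x = 0) /\
      v = \sum_(j < r) c j *: ptensor (a j).
Arguments Pbar_tensor : clear implicits.

(* Main.v *)
From HB Require Import structures.
Require Import Defs.
From mathcomp Require Import all_boot all_algebra.
From mathcomp Require Import zify.
From Stdlib Require Import Classical ClassicalEpsilon.
Set Implicit Arguments. Unset Strict Implicit. Unset Printing Implicit Defensive.
Import GRing.Theory.
Local Open Scope ring_scope.


Section Act.
Variables (k : fieldType) (M : FAmod k).

Lemma act0 m m' (f : fmap m m') : @fa_act _ M _ _ f 0 = 0.
Proof.
have := @fa_act_lin _ M _ _ f 1 0 0; rewrite !scale1r addr0.
by move=> /(congr1 (fun z => z - @fa_act _ M _ _ f 0)); rewrite subrr addrK => <-.
Qed.

Lemma actD m m' (f : fmap m m') x y : @fa_act _ M _ _ f (x + y) = @fa_act _ M _ _ f x + @fa_act _ M _ _ f y.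
Proof. by have := @fa_act_lin _ M _ _ f 1 x y; rewrite !scale1r. Qed.

Lemma actZ m m' (f : fmap m m') a x : @fa_act _ M _ _ f (a *: x) = a *: @fa_act _ M _ _ f x.
Proof. by have := @fa_act_lin _ M _ _ f a x 0; rewrite !addr0 act0 addr0. Qed.

Lemma actN m m' (f : fmap m m') x : @fa_act _ M _ _ f (- x) = - @fa_act _ M _ _ f x.
Proof. by rewrite -scaleN1r actZ scaleN1r. Qed.

Lemma actB m m' (f : fmap m m') x y : @fa_act _ M _ _ f (x - y) = @fa_act _ M _ _ f x - @fa_act _ M _ _ f y.
Proof. by rewrite actD actN. Qed.

Lemma act_sum m m' (f : fmap m m') (I : Type) (r : seq I) (P : pred I) (F : I -> fa_obj M m) :
  @fa_act _ M _ _ f (\sum_(i <- r | P i) F i) = \sum_(i <- r | P i) @fa_act _ M _ _ f (F i).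
Proof.
elim/big_rec2: _ => [|i y1 y2 _ <-]; first exact: act0.
by rewrite actD.
Qed.

Lemma subf0 (S : subfam M) : is_subfunctor S -> forall m, S m 0.
Proof. by case. Qed.
Lemma subfD (S : subfam M) : is_subfunctor S -> forall m x y, S m x -> S m y -> S m (x + y).
Proof. by case=> _ H _ m x y Hx Hy; have := H m 1 x y Hx Hy; rewrite scale1r. Qed.
Lemma subfZ (S : subfam M) : is_subfunctor S -> forall m a x, S m x -> S m (a *: x).
Proof. by case=> H0 H _ m a x Hx; have := H m a x 0 Hx (H0 m); rewrite addr0. Qed.
Lemma subfN (S : subfam M) : is_subfunctor S -> forall m x, S m x -> S m (- x).
Proof. by move=> HS m x Hx; rewrite -scaleN1r; apply: subfZ. Qed.
Lemma subfB (S : subfam M) : is_subfunctor S -> forall m x y, S m x -> S m y -> S m (x - y).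
Proof. by move=> HS m x y Hx Hy; apply: subfD => //; apply: subfN. Qed.
Lemma subfA (S : subfam M) : is_subfunctor S -> forall m m' (f : fmap m m') x, S m x -> S m' (@fa_act _ M _ _ f x).
Proof. by case. Qed.
Lemma subf_sum (S : subfam M) : is_subfunctor S -> forall m (I : Type) (r : seq I) (P : pred I) (F : I -> fa_obj M m),
  (forall i, P i -> S m (F i)) -> S m (\sum_(i <- r | P i) F i).
Proof.
move=> HS m I r P F HF; elim/big_rec: _ => [|i x Pi Hx]; first exact: subf0.
by apply: subfD => //; apply: HF.
Qed.

End Act.

Section Chain.
Variables (k : fieldType) (M : FAmod k) (S : subfam M) (D : subfam M -> nat) (B : nat).
Arguments S : clear implicits.
Hypothesis HS : is_subfunctor S.
Hypothesis HB : forall T, is_subfunctor T -> sub_le T S -> (D T <= B)%N.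
Hypothesis HD : forall T T', is_subfunctor T -> is_subfunctor T' -> sub_le T' S ->
  sub_lt T T' -> (D T < D T')%N.

Definition chain r (C : nat -> subfam M) :=
  [/\ forall i, (i <= r)%N -> is_subfunctor (C i),
      forall i, (i <= r)%N -> sub_le (C i) S,
      forall m x, C 0%N m x <-> x = 0,
      forall m x, C r m x <-> S m x
    & forall i, (i < r)%N -> sub_lt (C i) (C i.+1)].

Lemma chain_D r C : chain r C -> forall i, (i <= r)%N -> (i <= D (C i))%N.
Proof.
case=> H1 H2 _ _ H5; elim=> [//|i IH] Hi.
have Hi' : (i < r)%N by [].
have := HD (H1 i (ltnW Hi')) (H1 _ Hi) (H2 _ Hi) (H5 _ Hi').
have := IH (ltnW Hi'); lia.
Qed.

Lemma chain_r r C : chain r C -> (r <= B)%N.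
Proof.
move=> Hc; have := chain_D Hc (leqnn r); case: Hc => H1 H2 _ _ _.
have := HB (H1 r (leqnn r)) (H2 r (leqnn r)); lia.
Qed.

Lemma sub_le_trans (T1 T2 T3 : subfam M) : sub_le T1 T2 -> sub_le T2 T3 -> sub_le T1 T3.
Proof. by move=> H1 H2 m x /H1 /H2. Qed.

Lemma chain_insert r C i T : chain r C -> (i < r)%N -> is_subfunctor T ->
  sub_lt (C i) T -> sub_lt T (C i.+1) ->
  chain r.+1 (fun j => if (j <= i)%N then C j else if j == i.+1 then T else C j.-1).
Proof.
case=> H1 H2 H3 H4 H5 Hir HT [HiT1 HiT2] [HTi1 HTi2]; split.
- move=> j Hj; case: ifP => Hji; first by apply: H1; lia.
  case: ifP => // /eqP Hj1; apply: H1; lia.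
- move=> j Hj; case: ifP => Hji; first by apply: H2; lia.
  case: ifP => [/eqP Hj1|/eqP Hj1]; last by apply: H2; lia.
  by apply: sub_le_trans HTi1 (H2 _ Hir).
- by move=> m x; rewrite leq0n; apply: H3.
- move=> m x; have -> : (r.+1 <= i)%N = false by lia.
  have -> : (r.+1 == i.+1) = false by apply/eqP; lia.
  exact: H4.
- move=> j Hj; cbv beta; case: (ltngtP j i) => Hji.
  + apply: H5; lia.
  + case: ifP => [/eqP Hj1|/eqP Hj1].
      subst j; have -> : (i.+2 == i.+1) = false by apply/eqP; lia.
      exact: (conj HTi1 HTi2).
    have -> : (j.+1 == i.+1) = false by apply/eqP; lia.
    have -> : j.+1.-1 = j.-1.+1 by lia.
    apply: H5; lia.
  + subst j; rewrite eqxx; exact: (conj HiT1 HiT2).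
Qed.

Lemma chain_fl : finite_length_sub S.
Proof.
have ex0 : exists r C, chain r C.
  pose Z : subfam M := fun m x => x = 0.
  have HZ : is_subfunctor Z.
    split => [//|m a x y -> ->|m m' f x ->]; first by rewrite scaler0 addr0.
    exact: act0.
  case: (classic (forall m x, S m x -> x = 0)) => [HS0|HS0].
    exists 0%N, (fun _ => Z); split.
    + by [].
    + by move=> i _ m x ->; exact: (subf0 HS).
    + by [].
    + by move=> m x; split => [->|]; [apply: subf0| apply: HS0].
    + by [].
  exists 1%N, (fun i => if i == 0%N then Z else S); split.
  + by case=> [|[|]].
  + case=> [_ m x ->|[|]] //; [exact: (subf0 HS m)|by move=> _ m x].
  + by [].
  + by [].
  + case=> // _; split; first by move=> m x ->; exact: (subf0 HS).
    apply: NNPP => H; apply: HS0 => m x Sx; apply: NNPP => Hx; apply: H; exists m, x.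
    by split.
suff: forall d r C, chain r C -> (B - r <= d)%N -> finite_length_sub S.
  by move=> H; case: ex0 => r [C Hc]; exact: (H (B - r)%N r C Hc (leqnn _)).
elim=> [|d IH] r C Hc Hd.
  case: (classic (exists i T, (i < r)%N /\ is_subfunctor T /\ sub_lt (C i) T /\ sub_lt T (C i.+1))).
    case=> i [T [Hi [HT [H1 H2]]]].
    have := chain_r (chain_insert Hc Hi HT H1 H2); have := chain_r Hc; lia.
  move=> Hno; exists r, C; case: Hc => H1 H2 H3 H4 H5; split => // i Hi T HT HH.
  by apply: Hno; exists i, T.
case: (classic (exists i T, (i < r)%N /\ is_subfunctor T /\ sub_lt (C i) T /\ sub_lt T (C i.+1))).
  case=> i [T [Hi [HT [H1 H2]]]].
  have Hc2 := chain_insert Hc Hi HT H1 H2.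
  apply: (IH r.+1 _ Hc2); have := chain_r Hc2; lia.
move=> Hno; exists r, C; case: Hc => H1 H2 H3 H4 H5; split => // i Hi T HT HH.
by apply: Hno; exists i, T.
Qed.

End Chain.


Section SDim.
Variable k : fieldType.

Definition pb (P : Prop) : bool := if excluded_middle_informative P then true else false.
Lemma pbP (P : Prop) : pb P <-> P.
Proof. by rewrite /pb; case: excluded_middle_informative. Qed.

Definition sdim (V : vectType k) (P : V -> Prop) : nat :=
  \max_(d < (dim V).+1 | pb (exists U : {vspace V}, (forall u, u \in U -> P u) /\ \dim U = d)) d.

Lemma sdim_le (V : vectType k) (P : V -> Prop) : (sdim P <= dim V)%N.
Proof. by apply/bigmax_leqP => i _; rewrite -ltnS. Qed.

Lemma sdim_ge (V : vectType k) (P : V -> Prop) (U : {vspace V}) :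
  (forall u, u \in U -> P u) -> (\dim U <= sdim P)%N.
Proof.
move=> HU.
have Hd : (\dim U < (dim V).+1)%N by rewrite ltnS -dimvf dimvS ?subvf.
apply: (@leq_bigmax_cond _ _ (fun d : 'I_(dim V).+1 => nat_of_ord d) (Ordinal Hd)).
by apply/pbP; exists U.
Qed.

Lemma sdim_mono (V : vectType k) (P Q : V -> Prop) :
  (forall x, P x -> Q x) -> (sdim P <= sdim Q)%N.
Proof.
move=> PQ; apply/bigmax_leqP => i /pbP [U [HU <-]].
by apply: sdim_ge => u /HU /PQ.
Qed.

Lemma sdim_ex (V : vectType k) (P : V -> Prop) : P 0 ->
  exists U : {vspace V}, (forall u, u \in U -> P u) /\ \dim U = sdim P.
Proof.
move=> P0.
pose A := [pred d : 'I_(dim V).+1 | pb (exists U : {vspace V}, (forall u, u \in U -> P u) /\ \dim U = d)].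
have HA : (0 < #|A|)%N.
  apply/card_gt0P; exists ord0; rewrite inE; apply/pbP; exists 0%VS; split; last by rewrite dimv0.
  by move=> u; rewrite memv0 => /eqP ->.
have [d Hd Hmax] := eq_bigmax_cond (fun d : 'I_(dim V).+1 => nat_of_ord d) HA.
move: Hd; rewrite inE => /pbP [U [HU HdU]]; exists U; split => //.
by rewrite /sdim HdU -Hmax.
Qed.

Lemma sdim_strict (V : vectType k) (P Q : V -> Prop) (y : V) : P 0 ->
  (forall x, P x -> Q x) -> (forall a u v, Q u -> Q v -> Q (a *: u + v)) ->
  Q y -> ~ P y -> (sdim P < sdim Q)%N.
Proof.
move=> P0 PQ Qlin Qy nPy.
have [U [HU HdU]] := sdim_ex P0.
have HW : forall w, w \in (U + <[y]>)%VS -> Q w.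
  move=> w /memv_addP [u Hu [v /vlineP [a ->] ->]].
  by rewrite addrC; apply: Qlin => //; apply: PQ; apply: HU.
apply: leq_trans (sdim_ge HW); rewrite -HdU.
have Hs : (U <= U + <[y]>)%VS by apply: addvSl.
have := dimv_leqif_sup Hs; case => Hle Heq.
rewrite ltn_neqAle Hle andbT Heq; apply/negP => HWU.
apply: nPy; apply: HU; apply: (subvP HWU); apply: (subvP (addvSr U <[y]>)); exact: memv_line.
Qed.

End SDim.


Definition kap m (p q : 'I_m) : fmap m m := [ffun i => if i == q then p else i].

Lemma kap_comm m (p q q' : 'I_m) : fcomp (kap p q) (kap p q') = fcomp (kap p q') (kap p q).
Proof.
apply/ffunP => i; rewrite !ffunE.
have [Hq'|Hq'] := eqVneq i q'; have [Hq|Hq] := eqVneq i q; rewrite /= ?if_same //.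
all: try by rewrite Hq' eqxx.
all: by rewrite (negbTE Hq').
Qed.

Section Gen.
Variables (k : fieldType) (M : FAmod k) (gens : seq {m : nat & fa_obj M m}).
Local Notation act := (@fa_act _ M _ _).

Definition Gen : subfam M := fun m x => forall P : fa_obj M m -> Prop,
  P 0 -> (forall a u v, P u -> P v -> P (a *: u + v)) ->
  (forall t, t \in gens -> forall h : fmap (tag t) m, P (act h (tagged t))) -> P x.
Arguments Gen : clear implicits.

Lemma Gen_gen t m (h : fmap (tag t) m) : t \in gens -> Gen m (act h (tagged t)).
Proof. by move=> Ht P _ _ HP; apply: HP. Qed.

Lemma Gen_sub : is_subfunctor Gen.
Proof.
split.
- by move=> m P P0.
- by move=> m a x y Hx Hy P P0 PL PG; apply PL; [exact: (Hx P P0 PL PG)|exact: (Hy P P0 PL PG)].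
- move=> m m' f x Hx; apply: (Hx (fun z => Gen m' (act f z))).
  + by rewrite act0 => P P0.
  + move=> a u v Hu Hv; rewrite (@fa_act_lin _ M) => P P0 PL PG.
    by apply PL; [exact: (Hu P P0 PL PG)|exact: (Hv P P0 PL PG)].
  + by move=> t Ht h; rewrite -fa_act_comp; apply: Gen_gen.
Qed.

Definition Nb := \max_(t <- gens) tag t.

Fixpoint Y m (p : 'I_m) (qs : seq 'I_m) (x : fa_obj M m) : fa_obj M m :=
  if qs is q :: qs' then Y p qs' x - act (kap p q) (Y p qs' x) else x.

Lemma Y_lin m (p : 'I_m) qs a x y : Y p qs (a *: x + y) = a *: Y p qs x + Y p qs y.
Proof.
elim: qs => [//|q qs IH] /=; rewrite IH (@fa_act_lin _ M).
by rewrite scalerBr opprD addrACA.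
Qed.

Lemma Y0 m (p : 'I_m) qs : Y p qs 0 = 0.
Proof. by elim: qs => [//|q qs IH] /=; rewrite IH act0 subrr. Qed.

Lemma Y_fix m (p q : 'I_m) qs v : act (kap p q) v = v -> act (kap p q) (Y p qs v) = Y p qs v.
Proof.
move=> Hv; elim: qs => [//|q' qs IH] /=.
by rewrite actB -fa_act_comp kap_comm fa_act_comp IH.
Qed.

Lemma Y_kill m (p q : 'I_m) qs v : act (kap p q) v = v -> q \in qs -> Y p qs v = 0.
Proof.
move=> Hv; elim: qs => [//|q' qs IH] /=; rewrite inE => /orP [/eqP <-|Hq].
  by rewrite Y_fix // subrr.
by rewrite IH // act0 subrr.
Qed.

Lemma miss_point n m (p : 'I_m) (h : fmap n m) : (n.+1 < m)%N ->
  exists2 q, q != p & forall i, h i != q.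
Proof.
move=> Hnm; apply: NNPP => Hno.
have Hsub : {subset predC1 p <= codom h}.
  move=> q; rewrite inE => Hqp; apply: NNPP => Hq; apply: Hno; exists q => // i.
  by apply/eqP => Hi; apply: Hq; rewrite -Hi codom_f.
have Hs : predC1 p \subset codom h by apply/subsetP.
have := subset_leq_card Hs; rewrite cardC1 card_ord.
have := card_size (codom h); rewrite size_codom card_ord.
move=> H1 H2; have := leq_trans H2 H1; lia.
Qed.

Lemma tag_le_Nb t : t \in gens -> (tag t <= Nb)%N.
Proof. by move=> Ht; exact: (@leq_bigmax_seq _ gens xpredT (fun t => tag t) t Ht). Qed.

Lemma Y_gen m (p : 'I_m) x : (Nb.+1 < m)%N -> Gen m x ->
  Y p [seq q <- enum 'I_m | q != p] x = 0.
Proof.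
move=> Hm Hx; apply: (Hx (fun z => Y p [seq q <- enum 'I_m | q != p] z = 0)).
- exact: Y0.
- by move=> a u v Hu Hv; rewrite Y_lin Hu Hv scaler0 addr0.
- move=> t Ht h.
  have Hn : ((tag t).+1 < m)%N by have := tag_le_Nb Ht; lia.
  have [q Hqp Hq] := miss_point p h Hn.
  apply: (@Y_kill _ p q); last by rewrite mem_filter Hqp mem_enum.
  rewrite -fa_act_comp; congr (act _ _); apply/ffunP => i; rewrite !ffunE.
  by rewrite (negbTE (Hq i)).
Qed.

End Gen.

Arguments Gen {k M} gens m x.
Section Meas.
Variables (k : fieldType) (M : FAmod k) (gens : seq {m : nat & fa_obj M m}).
Local Notation act := (@fa_act _ M _ _).

Lemma detect (T T' : subfam M) : is_subfunctor T -> is_subfunctor T' -> sub_le T' (Gen gens) ->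
  (forall m, (m < (Nb gens).+2)%N -> forall x, T' m x -> T m x) -> forall m x, T' m x -> T m x.
Proof.
move=> HT HT' HG Hsmall; elim/ltn_ind => m IH x Hx.
case: (ltnP m (Nb gens).+2) => Hm; first by apply: Hsmall.
case: m IH x Hx Hm => [|[|m]] IH x Hx Hm; try lia.
pose p := (ord0 : 'I_m.+2).
have Hk : forall q, q != p -> forall y, T' m.+2 y -> T m.+2 (act (kap p q) y).
  move=> q Hqp y Hy.
  pose g : fmap m.+2 m.+1 := [ffun i => odflt ord0 (unlift q (kap p q i))].
  pose l : fmap m.+1 m.+2 := [ffun j => lift q j].
  have Hfg : fcomp l g = kap p q.
    apply/ffunP => i; rewrite ffunE.
    have Hne : q != kap p q i.
      rewrite ffunE; have [Hiq|Hiq] := eqVneq i q; first by [].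
      by rewrite eq_sym.
    case: (unlift_some Hne) => j Hj Huj.
    by rewrite [g i]ffunE Huj /= ffunE Hj.
  rewrite -Hfg fa_act_comp; apply: (subfA HT); apply: IH; first by [].
  exact: (subfA HT').
have Hstep : forall qs, all (fun q => q != p) qs -> T m.+2 (x - Y p qs x).
  elim=> [|q qs IHq] /=; first by move=> _; rewrite subrr; exact: (subf0 HT m.+2).
  move/andP => [Hq Hqs].
  set y := Y p qs x.
  have -> : x - (y - act (kap p q) y) = (x - y) + act (kap p q) y.
    by rewrite opprB addrCA addrC.
  have -> : act (kap p q) y = act (kap p q) x - act (kap p q) (x - y).
    by rewrite actB opprB addrC subrK.
  apply: (subfD HT); first exact: IHq.
  apply: (subfB HT); first exact: Hk.
  by apply: (subfA HT); apply: IHq.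
have := Hstep [seq q <- enum 'I_m.+2 | q != p] (filter_all _ _).
rewrite (@Y_gen _ _ gens) ?subr0 //; last exact: HG.
Qed.


Definition KK m := {j : 'I_(size gens) & fmap (tag (tnth (in_tuple gens) j)) m}.
Definition VV m := {ffun KK m -> k^o}.
Definition LL m (c : VV m) : fa_obj M m :=
  \sum_(q : KK m) c q *: act (tagged q) (tagged (tnth (in_tuple gens) (tag q))).

Lemma LL_lin m a (c c' : VV m) : LL (a *: c + c') = a *: LL c + LL c'.
Proof.
rewrite /LL scaler_sumr -big_split; apply: eq_bigr => q _.
by rewrite !ffunE scalerDl scalerA.
Qed.

Lemma LL0 m : LL (0 : VV m) = 0.
Proof. by rewrite /LL big1 // => q _; rewrite ffunE scale0r. Qed.

Lemma Gen_LL m x : Gen gens m x -> exists c : VV m, x = LL c.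
Proof.
move=> Hx; apply: (Hx (fun z => exists c : VV m, z = LL c)).
- by exists 0; rewrite LL0.
- by move=> a u v [c ->] [c' ->]; exists (a *: c + c'); rewrite LL_lin.
- move=> t Ht h; case/(tnthP (in_tuple gens)): Ht => j Hj; subst t.
  exists [ffun q => ((q == Tagged (fun j => fmap (tag (tnth (in_tuple gens) j)) m) h) : nat)%:R].
  rewrite /LL (bigD1 (Tagged (fun j => fmap (tag (tnth (in_tuple gens) j)) m) h)) //= big1.
    by rewrite ffunE eqxx scale1r addr0.
  by move=> q Hq; rewrite ffunE (negbTE Hq) scale0r.
Qed.

Definition DD (T : subfam M) : nat :=
  \sum_(m < (Nb gens).+2) sdim (fun c : VV m => T m (LL c)).

Definition BB : nat := \sum_(m < (Nb gens).+2) dim (VV m).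

Lemma DD_bound T : (DD T <= BB)%N.
Proof. by apply: leq_sum => m _; apply: sdim_le. Qed.

Lemma sum_strict (n : nat) (f g : 'I_n -> nat) (i0 : 'I_n) :
  (forall i, f i <= g i)%N -> (f i0 < g i0)%N -> (\sum_i f i < \sum_i g i)%N.
Proof.
move=> Hle Hlt; rewrite (bigD1 i0) //= [X in (_ < X)%N](bigD1 i0) //=.
rewrite -addSn; apply: leq_add => //; apply: leq_sum => i _; exact: Hle.
Qed.

Lemma DD_strict T T' : is_subfunctor T -> is_subfunctor T' -> sub_le T' (Gen gens) ->
  sub_lt T T' -> (DD T < DD T')%N.
Proof.
move=> HT HT' HG [Hle [m0 [x0 [Hx0 Hnx0]]]].
have [m [Hm [x [Hx Hnx]]]] : exists m, (m < (Nb gens).+2)%N /\ exists x, T' m x /\ ~ T m x.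
  apply: NNPP => Hno; apply: Hnx0; apply: (detect HT HT' HG) Hx0 => m Hm x Hx.
  apply: NNPP => Hnx; apply: Hno; exists m; split => //; exists x; split => //.
have [c Hc] := Gen_LL (HG _ _ Hx); subst x.
rewrite /DD.
apply: (@sum_strict _ (fun i : 'I_(Nb gens).+2 => sdim (fun c : VV i => T i (LL c)))
  (fun i : 'I_(Nb gens).+2 => sdim (fun c : VV i => T' i (LL c))) (Ordinal Hm)) => [i|/=].
  by apply: sdim_mono => c'; apply: Hle.
apply: (@sdim_strict _ _ _ _ c) => //.
- by rewrite LL0; exact: (subf0 HT).
- by move=> c'; apply: Hle.
- by move=> a u v Hu Hv; rewrite LL_lin; case: HT' => _ HL _; apply: HL.
Qed.

Lemma gen_fl (S : subfam M) : is_subfunctor S -> sub_le S (Gen gens) -> finite_length_sub S.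
Proof.
move=> HS HSG; apply: (@chain_fl _ _ _ DD BB HS).
- by move=> T _ _; apply: DD_bound.
- move=> T T' HT HT' HT'S; apply: DD_strict => //.
  by move=> m x /HT'S /HSG.
Qed.

End Meas.

Arguments Gen {k M} gens m x.

Section PartOne.
Variable k : fieldType.

Lemma fcomp_idr m1 m2 (h : fmap m1 m2) : fcomp h (fid m1) = h.
Proof. by apply/ffunP => i; rewrite !ffunE. Qed.

Definition delta n : Pvec k n n := [ffun g => ((g == fid n) : nat)%:R].

Lemma Pact_delta n m (h : fmap n m) : Pact h (delta n) = [ffun g => ((g == h) : nat)%:R].
Proof.
apply/ffunP => g; rewrite !ffunE big_mkcond (bigD1 (fid n)) //= big1.
  rewrite ffunE eqxx addr0 fcomp_idr.
  by rewrite eq_sym; case: (g == h).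
by move=> h' /negbTE Hh; rewrite ffunE Hh if_same.
Qed.


Definition Pgens n : seq {m : nat & fa_obj (Pmod k n) m} :=
  [:: existT (fun m => fa_obj (Pmod k n) m) n (delta n)].

Lemma Pmod_gen n m (v : Pvec k n m) : Gen (Pgens n) m v.
Proof.
have -> : v = \sum_(h : fmap n m) v h *: Pact h (delta n).
  apply/ffunP => g; rewrite sum_ffunE (bigD1 g) //= big1 => [|h Hh].
    by rewrite ffunE Pact_delta ffunE eqxx addr0; exact: (esym (mulr1 (v g))).
  by rewrite ffunE Pact_delta ffunE eq_sym (negbTE Hh) scaler0.
apply: (subf_sum (Gen_sub (Pgens n))) => h _.
apply: (subfZ (Gen_sub (Pgens n))).
exact: (@Gen_gen _ (Pmod k n) (Pgens n) (existT (fun m => fa_obj (Pmod k n) m) n (delta n)) m h (mem_head _ _)).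
Qed.


Definition push m m' (f : fmap m m') (b : {ffun 'I_m -> k}) : {ffun 'I_m' -> k} :=
  [ffun y => \sum_(x | f x == y) b x].

Lemma push_sum0 m m' (f : fmap m m') (b : {ffun 'I_m -> k}) :
  \sum_x b x = 0 -> \sum_y push f b y = 0.
Proof.
move=> H; rewrite -[RHS]H [RHS](partition_big f predT) //=.
by apply: eq_bigr => y _; rewrite ffunE.
Qed.

Lemma Pact_ptensor n m m' (f : fmap m m') (a : 'I_n -> {ffun 'I_m -> k}) :
  Pact f (ptensor a) = ptensor (fun i => push f (a i)).
Proof.
apply/ffunP => g; rewrite !ffunE.
under eq_bigr do rewrite ffunE.
under [RHS]eq_bigr do rewrite ffunE.
rewrite (bigA_distr_big_dep (fun i x => f x == g i) (fun i x => a i x)).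
apply: eq_bigl => h; apply/eqP/familyP => [<- i|H].
  by rewrite unfold_in /= ffunE.
by apply/ffunP => i; rewrite ffunE; have := H i; rewrite unfold_in /= => /eqP.
Qed.


Lemma Pbar_sub n : is_subfunctor (Pbar_tensor k n).
Proof.
case: n => [|n].
  split.
  - by move=> m; right.
  - move=> m a x y [Hm|->]; first by left.
    case=> [Hm|->]; first by left.
    by right; rewrite scaler0 addr0.
  - move=> m m' f x [Hm|->].
      by left; have := ltn_ord (f (Ordinal Hm)); lia.
    by right; exact: (act0 (Pmod k 0) f).
split.
- move=> m; exists 0%N, (fun _ => 0), (fun _ _ => 0); split; first by case.
  by rewrite big_ord0.
- move=> m a x y [r1 [c1 [a1 [H1 ->]]]] [r2 [c2 [a2 [H2 ->]]]].
  exists (r1 + r2)%N, (fun j => match split j with inl j1 => a * c1 j1 | inr j2 => c2 j2 end),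
    (fun j => match split j with inl j1 => a1 j1 | inr j2 => a2 j2 end); split.
    by move=> j i; case: (split j).
  rewrite big_split_ord /=; congr (_ + _).
    rewrite scaler_sumr; apply: eq_bigr => j _.
    have -> : split (lshift r2 j) = inl j by exact: (unsplitK (inl j)).
    by rewrite scalerA.
  apply: eq_bigr => j _.
  by have -> : split (rshift r1 j) = inr j by exact: (unsplitK (inr j)).
- move=> m m' f x [r [c [a [Ha ->]]]]; exists r, c, (fun j i => push f (a j i)); split.
    by move=> j i; apply: push_sum0.
  rewrite (act_sum (M := Pmod k n.+1)); apply: eq_bigr => j _.
  by rewrite (actZ (M := Pmod k n.+1)) /= Pact_ptensor.
Qed.

Theorem part_one n : finite_length_sub (Pbar_tensor k n).
Proof.
apply: (@gen_fl _ (Pmod k n) (Pgens n) _ (Pbar_sub n)).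
by move=> m x _; apply: Pmod_gen.
Qed.

End PartOne.

From mathcomp Require Import finmap monalg.


Section Ext.
Variables (k : fieldType) (K : choiceType) (V : lmodType k).

Definition ext (F : K -> V) (g : {malg k[K]}) : V := \sum_(x <- msupp g) g@_x *: F x.

Lemma extEw F g (d : {fset K}) : (msupp g `<=` d)%fset -> ext F g = \sum_(x <- d) g@_x *: F x.
Proof.
move=> Hd; rewrite /ext; apply: big_fset_incl => // x _ Hx.
by rewrite mcoeff_outdom // scale0r.
Qed.

Lemma ext_lin F a g g' : ext F (a *: g + g') = a *: ext F g + ext F g'.
Proof.
pose d := (msupp g `|` msupp g')%fset.
have H1 : (msupp g `<=` d)%fset by apply: fsubsetUl.
have H2 : (msupp g' `<=` d)%fset by apply: fsubsetUr.
have H3 : (msupp (a *: g + g') `<=` d)%fset.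
  apply: fsubset_trans (msuppD_le _ _) _; apply: fsetSU; exact: msuppZ_le.
rewrite (extEw F H1) (extEw F H2) (extEw F H3) scaler_sumr -big_split.
by apply: eq_bigr => x _; rewrite mcoeffD mcoeffZ scalerDl scalerA.
Qed.

Lemma eq_ext F F' g : (forall x, F x = F' x) -> ext F g = ext F' g.
Proof. by move=> H; apply: eq_bigr => x _; rewrite H. Qed.

Lemma ext0 F : ext F 0 = 0.
Proof. by rewrite /ext msupp0 big_nil. Qed.

Lemma extU F c x : ext F << c *g x >> = c *: F x.
Proof. by rewrite (extEw F msuppU_le) big_seq_fset1 mcoeffUU. Qed.

Lemma ext_sum F (I : Type) (r : seq I) (P : pred I) (c : I -> k) (G : I -> {malg k[K]}) :
  ext F (\sum_(i <- r | P i) c i *: G i) = \sum_(i <- r | P i) c i *: ext F (G i).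
Proof.
elim/big_rec2: _ => [|i y1 y2 _ <-]; first exact: ext0.
by rewrite ext_lin.
Qed.

End Ext.

Lemma scale_mon (k : fieldType) (K : choiceType) (c : k) (x : K) :
  c *: (<< x >> : {malg k[K]}) = << c *g x >>.
Proof.
apply/malgP => y; rewrite mcoeffZ !mcoeffU.
by case: (x == y); rewrite ?mulr1n ?mulr0n ?mulr1 ?mulr0.
Qed.

Lemma ext_sumT (k : fieldType) (K : choiceType) (V : lmodType k) (F : K -> V) (I : Type) (r : seq I) (c : I -> k) (G : I -> {malg k[K]}) :
  ext F (\sum_(i <- r) c i *: G i) = \sum_(i <- r) c i *: ext F (G i).
Proof. exact: ext_sum. Qed.

Lemma ext_id (k : fieldType) (K : choiceType) (g : {malg k[K]}) :
  ext (fun x : K => (<< x >> : {malg k[K]})) g = g.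
Proof.
by rewrite [RHS]monalgE /ext; apply: eq_bigr => x _; rewrite scale_mon.
Qed.

Lemma ext_ext (k : fieldType) (K K' : choiceType) (V : lmodType k) (F : K -> {malg k[K']})
  (G : K' -> V) g : ext G (ext F g) = ext (fun x => ext G (F x)) g.
Proof. by rewrite [ext F g]/ext ext_sumT. Qed.

Lemma act_ext (k : fieldType) (M : FAmod k) (K : choiceType) m m' (f : fmap m m')
  (F : K -> fa_obj M m) g :
  @fa_act _ M _ _ f (ext F g) = ext (fun x => @fa_act _ M _ _ f (F x)) g.
Proof. by rewrite /ext act_sum; apply: eq_bigr => x _; rewrite actZ. Qed.

Section Free.
Variables (k : fieldType) (M : FAmod k).
Local Notation act := (@fa_act _ M _ _).

Definition KQ m' := {m : nat & (fmap m m' * fa_obj M m)%type}.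
Definition QV m' : lmodType k := {malg k[KQ m']}.

Definition kmap m m' (f : fmap m m') (x : KQ m) : KQ m' :=
  existT (fun m0 => (fmap m0 m' * fa_obj M m0)%type) (tag x) (fcomp f (tagged x).1, (tagged x).2).

Definition Qact m m' (f : fmap m m') (g : QV m) : QV m' :=
  ext (fun x => (<< kmap f x >> : {malg k[KQ m']})) g.

Lemma Qact_lin m m' (f : fmap m m') a x y : Qact f (a *: x + y) = a *: Qact f x + Qact f y.
Proof. exact: ext_lin. Qed.

Lemma Qact_id m (x : QV m) : Qact (fid m) x = x.
Proof.
rewrite /Qact -[RHS]ext_id; apply: eq_ext => -[m0 [h y]].
by rewrite /kmap /= fcomp_id.
Qed.

Lemma Qact_comp m1 m2 m3 (f : fmap m1 m2) (g : fmap m2 m3) (x : QV m1) :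
  Qact (fcomp g f) x = Qact g (Qact f x).
Proof.
rewrite /Qact ext_ext; apply: eq_ext => -[m0 [h y]].
by rewrite extU scale1r /kmap /= fcompA.
Qed.

Definition Qmod : FAmod k := @FAMod k QV Qact Qact_lin Qact_id Qact_comp.

Definition eps m (g : QV m) : fa_obj M m := ext (fun x => act (tagged x).1 (tagged x).2) g.

Lemma eps_nat : is_nat_trans (M := Qmod) (N := M) eps.
Proof.
split; first by move=> m a x y; exact: ext_lin.
move=> m m' f x; rewrite /= /eps /Qact ext_ext act_ext; apply: eq_ext => -[m0 [h y]].
by rewrite extU scale1r /kmap /= fa_act_comp.
Qed.

Lemma eps_surj m (y : fa_obj M m) : exists x, eps x = y.
Proof.
exists (<< existT (fun m0 => (fmap m0 m * fa_obj M m0)%type) m (fid m, y) >> : QV m).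
by rewrite /eps extU scale1r /= fa_act_id.
Qed.

End Free.

Arguments Gen {k M} gens m x.

Section Two.
Variables (k : fieldType) (M : FAmod k) (sig : forall m, fa_obj M m -> QV M m).
Arguments sig : clear implicits.
Hypothesis Hsig : is_nat_trans (M := M) (N := Qmod M) sig.
Hypothesis Hes : forall m x, eps (sig m x) = x.
Variables (m0 : nat) (x0 : fa_obj M m0).
Local Notation act := (@fa_act _ M _ _).

Definition gens : seq {m : nat & fa_obj M m} :=
  [seq existT (fun m => fa_obj M m) (tag x) (tagged x).2 | x <- msupp (sig m0 x0)].

Definition Gfun m (x : KQ M m) : fa_obj M m :=
  if existT (fun m => fa_obj M m) (tag x) (tagged x).2 \in gens
  then act (tagged x).1 (tagged x).2 else 0.

Definition Om m (x : fa_obj M m) : fa_obj M m := ext (@Gfun m) (sig m x).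

Lemma Om_lin m a (x y : fa_obj M m) : Om (a *: x + y) = a *: Om x + Om y.
Proof. by rewrite /Om (proj1 Hsig) ext_lin. Qed.

Lemma Om0 m : Om (0 : fa_obj M m) = 0.
Proof. by have := @Om_lin m 1 0 0; rewrite !scale1r !addr0 => /(congr1 (fun z => z - Om 0)); rewrite subrr addrK. Qed.

Lemma Om_nat m m' (f : fmap m m') x : Om (act f x) = act f (Om x).
Proof.
rewrite /Om (proj2 Hsig) /= /Qact ext_ext act_ext; apply: eq_ext => -[m1 [h y]].
rewrite extU scale1r /Gfun /kmap /=; case: ifP => _; first by rewrite fa_act_comp.
by rewrite act0.
Qed.

Lemma Om_x0 : Om x0 = x0.
Proof.
rewrite /Om -{2}(Hes x0) /eps /ext; apply: eq_big_seq => x Hx.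
by rewrite /Gfun (map_f (fun x : KQ M m0 => existT (fun m => fa_obj M m) (tag x) (tagged x).2) Hx).
Qed.

Lemma Om_gen m (x : fa_obj M m) : Gen gens m (Om x).
Proof.
rewrite /Om /ext; apply: (subf_sum (Gen_sub gens)) => key _.
apply: (subfZ (Gen_sub gens)); rewrite /Gfun; case: ifP => H.
  exact: (@Gen_gen _ M gens (existT (fun m => fa_obj M m) (tag key) (tagged key).2) m (tagged key).1 H).
exact: (subf0 (Gen_sub gens)).
Qed.

Definition Oi s m (x : fa_obj M m) := iter s (@Om m) x.

Lemma Oi_lin s m a (x y : fa_obj M m) : Oi s (a *: x + y) = a *: Oi s x + Oi s y.
Proof. by elim: s => [//|s IH]; rewrite /Oi !iterS -!/(Oi _ _) IH Om_lin. Qed.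

Lemma Oi0 s m : Oi s (0 : fa_obj M m) = 0.
Proof. by elim: s => [//|s IH]; rewrite /Oi iterS -/(Oi _ _) IH Om0. Qed.

Lemma OiB s m (x y : fa_obj M m) : Oi s (x - y) = Oi s x - Oi s y.
Proof.
have := Oi_lin s 1 y (x - y); rewrite !scale1r [y + _]addrC subrK => ->.
by rewrite [Oi s y + _]addrC addrK.
Qed.

Lemma Oi_nat s m m' (f : fmap m m') x : Oi s (act f x) = act f (Oi s x).
Proof. by elim: s => [//|s IH]; rewrite /Oi !iterS -!/(Oi _ _) IH Om_nat. Qed.

Lemma Oi_x0 s : Oi s x0 = x0.
Proof. by elim: s => [//|s IH]; rewrite /Oi iterS -/(Oi _ _) IH Om_x0. Qed.

Lemma Oi_gen s m (x : fa_obj M m) : (0 < s)%N -> Gen gens m (Oi s x).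
Proof. by case: s => [//|s] _; rewrite /Oi iterS; apply: Om_gen. Qed.

Lemma Oi_genx s m (x : fa_obj M m) : Gen gens m x -> Gen gens m (Oi s x).
Proof. by case: s => [//|s] _; apply: Oi_gen. Qed.

Lemma OiD s t m (x : fa_obj M m) : Oi (s + t) x = Oi s (Oi t x).
Proof. exact: iterD. Qed.

Definition CC s : subfam M := fun m x => exists y, x = Oi s y.
Arguments CC : clear implicits.
Definition Ker s : subfam M := fun m x => Gen gens m x /\ Oi s x = 0.
Arguments Ker : clear implicits.

Lemma CC_sub s : is_subfunctor (CC s).
Proof.
split.
- by move=> m; exists 0; rewrite Oi0.
- by move=> m a x y [x' ->] [y' ->]; exists (a *: x' + y'); rewrite Oi_lin.
- by move=> m m' f x [y ->]; exists (act f y); rewrite Oi_nat.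
Qed.

Lemma KK_sub s : is_subfunctor (Ker s).
Proof.
split.
- by move=> m; split; [exact: (subf0 (Gen_sub gens))|exact: Oi0].
- move=> m a x y [Gx Hx] [Gy Hy]; split; last by rewrite Oi_lin Hx Hy scaler0 addr0.
  by case: (Gen_sub gens) => _ HL _; apply: HL.
- move=> m m' f x [Gx Hx]; split; last by rewrite Oi_nat Hx act0.
  exact: (subfA (Gen_sub gens)).
Qed.

Lemma CC_le s : sub_le (CC s.+1) (CC s).
Proof. by move=> m x [y ->]; exists (Om y); rewrite /Oi iterSr. Qed.

Lemma CC_gen s : (0 < s)%N -> sub_le (CC s) (Gen gens).
Proof. by move=> Hs m x [y ->]; apply: Oi_gen. Qed.

Lemma KK_le s : sub_le (Ker s) (Ker s.+1).
Proof. by move=> m x [Gx Hx]; split => //; rewrite /Oi iterS -/(Oi _ _) Hx Om0. Qed.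

Lemma not_le_lt (T1 T2 : subfam M) : sub_le T2 T1 -> ~ sub_le T1 T2 -> sub_lt T2 T1.
Proof.
move=> H21 Hn; split => //; apply: NNPP => Hno; apply: Hn => m x Hx.
by apply: NNPP => Hnx; apply: Hno; exists m, x.
Qed.

Lemma CC_stab : exists t, (0 < t)%N /\ sub_le (CC t) (CC t.+1).
Proof.
apply: NNPP => Hno.
have Hlt : forall t, (0 < t)%N -> (DD gens (CC t.+1) < DD gens (CC t))%N.
  move=> t Ht; apply: DD_strict; [exact: CC_sub|exact: CC_sub|exact: CC_gen|].
  apply: not_le_lt; first exact: CC_le.
  by move=> Hle; apply: Hno; exists t.
have Hind : forall s, (s + DD gens (CC s.+1) <= DD gens (CC 1))%N.
  elim=> [//|s IH]; have := Hlt s.+1 (ltn0Sn _); lia.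
have := Hind (BB gens).+1; have := DD_bound gens (CC 1); lia.
Qed.

Lemma KK_stab : exists t, sub_le (Ker t.+1) (Ker t).
Proof.
apply: NNPP => Hno.
have Hlt : forall t, (DD gens (Ker t) < DD gens (Ker t.+1))%N.
  move=> t; apply: DD_strict; [exact: KK_sub|exact: KK_sub|by move=> m x []|].
  apply: not_le_lt; first exact: KK_le.
  by move=> Hle; apply: Hno; exists t.
have Hind : forall s, (s <= DD gens (Ker s))%N.
  elim=> [//|s IH]; have := Hlt s; lia.
have := Hind (BB gens).+1; have := DD_bound gens (Ker (BB gens).+1); lia.
Qed.

Lemma CC_prop t : sub_le (CC t) (CC t.+1) -> forall u, sub_le (CC (t + u)) (CC (t + u).+1).
Proof.
move=> Ht; elim=> [|u IH]; first by rewrite addn0.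
move=> m x [y ->]; rewrite addnS.
have [z Hz] := IH m (Oi (t + u) y) (ex_intro _ y erefl).
by exists z; rewrite /Oi iterS -/(Oi _ y) Hz /Oi -iterS.
Qed.

Lemma CC_prop2 t : sub_le (CC t) (CC t.+1) -> forall s u, (t <= s)%N -> sub_le (CC s) (CC (s + u)).
Proof.
move=> Ht s; elim=> [|u IH] Hs; first by rewrite addn0.
move=> m x Hx; rewrite addnS.
have := @CC_prop t Ht (s + u - t)%N; have -> : (t + (s + u - t) = s + u)%N by lia.
by apply; apply: IH.
Qed.

Lemma KK_prop t : sub_le (Ker t.+1) (Ker t) -> forall u, sub_le (Ker (t + u)) (Ker t).
Proof.
move=> Ht; elim=> [|u IH]; first by rewrite addn0.
move=> m x [Gx Hx]; apply: IH; split => //.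
have H1 : Ker t.+1 m (Oi u x).
  split; first exact: Oi_genx.
  by rewrite -OiD addSnnS.
by have [_ H2] := Ht m _ H1; rewrite OiD.
Qed.

Hypothesis Hx0 : x0 <> 0.
Hypothesis HI : indecomposable M.

Lemma all_gen m (x : fa_obj M m) : Gen gens m x.
Proof.
have [t0 [Ht0 H0]] := CC_stab.
have [t1 H1] := KK_stab.
pose r := (t0 + t1).+1.
pose T : subfam M := fun m x => Oi r x = 0.
have HT : is_subfunctor T.
  split.
  - by move=> m1; exact: Oi0.
  - by move=> m1 a y z Hy Hz; rewrite /T Oi_lin Hy Hz scaler0 addr0.
  - by move=> m1 m2 f y Hy; rewrite /T Oi_nat Hy act0.
have Hsum : forall m1 (x1 : fa_obj M m1), exists y z, [/\ CC r m1 y, T m1 z & x1 = y + z].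
  move=> m1 x1.
  have Hc : CC r m1 (Oi r x1) by exists x1.
  have Hle : (t0 <= r)%N by rewrite /r; lia.
  have [w Hw] := @CC_prop2 t0 H0 r r Hle m1 (Oi r x1) Hc.
  exists (Oi r w), (x1 - Oi r w); split.
  - by exists w.
  - by rewrite /T OiB Hw OiD subrr.
  - by rewrite addrC subrK.
have Hcap : forall m1 (x1 : fa_obj M m1), CC r m1 x1 -> T m1 x1 -> x1 = 0.
  move=> m1 x1 [w ->] Hw; rewrite /T -OiD in Hw.
  pose n2 := (r + r).-1.
  have Hn2 : (t1 + (n2 - t1) = n2)%N by rewrite /n2 /r; lia.
  have HK : Ker (t1 + (n2 - t1))%N m1 (Om w).
    split; first exact: Om_gen.
    rewrite Hn2 /Oi -iterSr.
    have -> : n2.+1 = (r + r)%N by rewrite /n2 /r; lia.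
    exact: Hw.
  have [_ HK2] := @KK_prop t1 H1 (n2 - t1)%N m1 (Om w) HK.
  have HK3 : Oi t1.+1 w = 0 by rewrite /Oi iterSr.
  have -> : r = (t0 + t1.+1)%N by rewrite /r addnS.
  by rewrite OiD HK3 Oi0.
case: HI => _ HI2.
case: (HI2 (CC r) T (CC_sub r) HT Hsum Hcap) => [HS|HT0].
  by exfalso; apply: Hx0; apply: HS; exists x0; rewrite Oi_x0.
have [y [z [Hy Hz ->]]] := Hsum m x.
rewrite (HT0 _ _ Hz) addr0.
by apply: (CC_gen (s := r)).
Qed.

End Two.


Lemma part_two (k : fieldType) (M : FAmod k) : projective M -> indecomposable M -> finite_length M.
Proof.
move=> HP HI; have HI' := HI; case: HI' => [[m0 [x0 Hx0]] _].
have idnat : is_nat_trans (M := M) (N := M) (fun m x => x) by split.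
have [sig [Hsig Hes]] := HP (Qmod M) M (@eps k M) (eps_nat M) (fun m y => eps_surj y) (fun m x => x) idnat.
rewrite /finite_length; apply: (@gen_fl _ M (@gens k M sig m0 x0) (@full_sub k M)).
  by split.
move=> m x _; exact: (all_gen Hsig Hes Hx0 HI).
Qed.

Theorem mainTheorem6 (k : fieldType) :
  (forall n : nat, finite_length_sub (Pbar_tensor k n)) /\
  (forall M : FAmod k, projective M -> indecomposable M -> finite_length M).
Proof.
split; [exact: part_one | exact: part_two].
Qed.
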